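(* Let $P,Q_0,Q_1$ be probability measures with $Q_1\perp P$, and let $0\le\epsilon\le1$. Then $$H^2(P,(1-\epsilon)Q_0+\epsilon Q_1)=2(1-\sqrt{1-\epsilon})+\sqrt{1-\epsilon}\,H^2(P,Q_0),$$ and $$\frac14\le\frac{H^2(P,(1-\epsilon)Q_0+\epsilon Q_1)}{\epsilon\vee H^2(P,Q_0)}\le4.$$
   Context: $H^2(P,Q)=\int(\sqrt{dP}-\sqrt{dQ})^2$ is the squared Hellinger distance. $Q_1\perp P$ means there is a measurable set $A$ with $Q_1(A)=1$ and $P(A)=0$. $a\vee b=\max(a,b)$. *)

(* Defs.v *)
From HB Require Import structures.
From mathcomp Require Import all_boot all_order all_algebra.
From mathcomp Require Import all_classical all_reals all_analysis.
Set Implicit Arguments. Unset Strict Implicit. Unset Printing Implicit Defensive.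
Import Order.TTheory GRing.Theory Num.Theory.
Local Open Scope classical_set_scope.
Local Open Scope ring_scope.

Definition is_density d (T : measurableType d) (R : realType)
  (mu : {measure set T -> \bar R}) (P : set T -> \bar R) (p : T -> R) : Prop :=
  [/\ measurable_fun setT p, (forall x, 0 <= p x) &
      forall A, measurable A -> P A = (\int[mu]_(x in A) (p x)%:E)%E].

(* Squared Hellinger distance  H^2(P,Q) = \int (sqrt dP - sqrt dQ)^2,
   computed from densities p, q of P, Q w.r.t. a common dominating measure mu. *)
Definition hellinger2 d (T : measurableType d) (R : realType)
  (mu : {measure set T -> \bar R}) (p q : T -> R) : \bar R :=
  (\int[mu]_x ((Num.sqrt (p x) - Num.sqrt (q x)) ^+ 2)%:E)%E.

Definition singular_to d (T : measurableType d) (R : realType)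
  (Q1 P : set T -> \bar R) : Prop :=
  exists A, [/\ measurable A, Q1 A = 1%E & P A = 0%E].

Definition mixture d (T : measurableType d) (R : realType) (eps : R)
  (Q0 Q1 : set T -> \bar R) : set T -> \bar R :=
  fun A => ((1 - eps)%:E * Q0 A + eps%:E * Q1 A)%E.

(* Main.v *)
Require Import Defs.
From HB Require Import structures.
From mathcomp Require Import all_boot all_order all_algebra.
From mathcomp Require Import all_classical all_reals all_analysis.
From mathcomp Require Import measurable_realfun ring lra.
Import Order.TTheory GRing.Theory Num.Theory.
Local Open Scope classical_set_scope.
Local Open Scope ring_scope.

Lemma pt_id (R : rcfType) (s eps p q0 q1 m : R) : 0 <= s -> s ^+ 2 = 1 - eps ->
  0 <= p -> 0 <= q0 -> 0 <= m -> (p = 0 \/ q1 = 0) -> m = (1 - eps) * q0 + eps * q1 ->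
  (Num.sqrt p - Num.sqrt m) ^+ 2 + (1 - s) * s * q0 =
  s * (Num.sqrt p - Num.sqrt q0) ^+ 2 + (1 - s) * p + eps * q1.
Proof.
move=> s0 s2 p0 q00 m0 [hp|hq] hm.
- rewrite hp sqrtr0 !sub0r !sqrrN !sqr_sqrtr // hm mulr0 addr0 -s2; ring.
- rewrite hm hq mulr0 addr0 sqrtrM -?s2 ?sqr_ge0 // sqrtr_sqr ger0_norm //.
  have Hp := sqr_sqrtr p0; have Hq := sqr_sqrtr q00.
  move: Hp Hq; move: (Num.sqrt p) (Num.sqrt q0) => a b <- <-.
  by ring.
Qed.

Lemma msqrt d (T : measurableType d) (R : realType) (f : T -> R) :
  measurable_fun setT f -> measurable_fun setT (fun x => Num.sqrt (f x)).
Proof. by move=> mf; exact: (measurableT_comp (continuous_measurable_fun (@sqrt_continuous R)) mf). Qed.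

Lemma dens1 {d} {T : measurableType d} {R : realType} {P : probability T R}
  {mu : {measure set T -> \bar R}} {p} : is_density mu P p ->
  (\int[mu]_x (p x)%:E = 1)%E.
Proof. by case=> _ _ h; rewrite -h // probability_setT. Qed.

Lemma dens_ae0 {d} {T : measurableType d} {R : realType} {P : set T -> \bar R}
  {mu : {measure set T -> \bar R}} {p A} : is_density mu P p -> measurable A ->
  P A = 0%E -> {ae mu, forall x, A x -> (p x)%:E = (cst 0%E) x}.
Proof.
case=> mp p0 h mA PA.
have mpA : measurable_fun A (EFin \o p).
  by apply/measurable_EFinP; exact: measurable_funS mp.
apply/(ae_eq_integral_abs mu mA mpA).
rewrite -PA h //; apply: eq_integral => x _ /=.
by rewrite ger0_norm.
Qed.

Theorem lemma7 (d : measure_display) (T : measurableType d) (R : realType)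
  (P Q0 Q1 : probability T R) (mu : {measure set T -> \bar R})
  (p q0 q1 m : T -> R) (eps : R) :
  0 <= eps <= 1 ->
  singular_to Q1 P ->
  is_density mu P p -> is_density mu Q0 q0 -> is_density mu Q1 q1 ->
  is_density mu (mixture eps Q0 Q1) m ->
  hellinger2 mu p m =
    ((2 * (1 - Num.sqrt (1 - eps)))%:E
     + (Num.sqrt (1 - eps))%:E * hellinger2 mu p q0)%E
  /\ ((4^-1)%:E * maxe eps%:E (hellinger2 mu p q0) <= hellinger2 mu p m
      <= 4%:E * maxe eps%:E (hellinger2 mu p q0))%E.
Proof.
move=> /andP[e0 e1] [A [mA Q1A PA]] dP dQ0 dQ1 dM.
have ip := dens1 dP; have iq0 := dens1 dQ0; have iq1 := dens1 dQ1.
have aeP := dens_ae0 dP mA PA.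
have Q1C : Q1 (~` A) = 0%E.
  have h : (Q1 setT = Q1 A + Q1 (~` A))%E.
    by rewrite -(setUv A); apply: measureU => //; [exact: measurableC | exact: setICr].
  rewrite probability_setT Q1A in h.
  have := congr1 (fun z => z - 1)%E h.
  by rewrite subee // addeAC subee // add0e.
have aeQ := dens_ae0 dQ1 (measurableC mA) Q1C.
case: dP => mp p0 hP; case: dQ0 => mq0 q00 hQ0; case: dQ1 => mq1 q10 hQ1.
case: dM => mm m0 hM.
have mg : measurable_fun setT (fun x => (1 - eps) * q0 x + eps * q1 x).
  by apply: measurable_funD; apply: measurable_funM => //; exact: measurable_cst.
have aeM : {ae mu, forall x, setT x -> (m x)%:E = ((1 - eps) * q0 x + eps * q1 x)%:E}.
  apply: (@integral_ae_eq _ _ _ mu setT measurableT (EFin \o (fun x => (1 - eps) * q0 x + eps * q1 x)) (EFin \o m)).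
  - apply/integrableP; split; first exact/measurable_EFinP.
    rewrite (eq_integral (EFin \o m)); last by move=> x _; rewrite /= ger0_norm.
    rewrite -hM // /mixture !probability_setT !mule1 -EFinD; exact: ltry.
  - exact/measurable_EFinP.
  - move=> E _ mE.
    rewrite -hM // /mixture hQ0 // hQ1 //.
    rewrite [RHS](eq_integral (fun x => ((1 - eps)%:E * (q0 x)%:E + eps%:E * (q1 x)%:E)%E)); last first.
      by move=> x _; rewrite /= EFinD !EFinM.
    rewrite ge0_integralD //; last 4 first.
    + by move=> x _; rewrite lee_fin mulr_ge0 // subr_ge0.
    + by apply: emeasurable_funM => //; apply/measurable_EFinP; exact: measurable_funS mq0.
    + by move=> x _; rewrite lee_fin mulr_ge0.
    + by apply: emeasurable_funM => //; apply/measurable_EFinP; exact: measurable_funS mq1.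
    rewrite ge0_integralZl_EFin // ?subr_ge0 //; last by apply/measurable_EFinP; exact: measurable_funS mq0.
    rewrite ge0_integralZl_EFin //; last by apply/measurable_EFinP; exact: measurable_funS mq1.
    by move=> x _; rewrite lee_fin.
    by move=> x _; rewrite lee_fin.
have ae : {ae mu, forall x, (p x = 0 \/ q1 x = 0) /\
                            m x = (1 - eps) * q0 x + eps * q1 x}.
  apply: filterS3 aeP aeQ aeM => x hp hq hm; split; last by case: (hm I).
  by case: (pselect (A x)) => Ax; [left; case: (hp Ax) | right; case: (hq Ax)].
have s0 := sqrtr_ge0 (1 - eps).
have s2 : Num.sqrt (1 - eps) ^+ 2 = 1 - eps by rewrite sqr_sqrtr // subr_ge0.
move: (Num.sqrt (1 - eps)) s0 s2 => s s0 s2.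
have s1 : s <= 1 by nra.
have s1' : 0 <= 1 - s by rewrite subr_ge0.
have mE (f : T -> R) : measurable_fun setT f -> measurable_fun setT (EFin \o f).
  by move=> mf; apply/measurable_EFinP.
have mh0 : measurable_fun setT (fun x => (Num.sqrt (p x) - Num.sqrt (q0 x)) ^+ 2).
  by apply: measurable_funX; apply: measurable_funB; exact: msqrt.
have mhm : measurable_fun setT (fun x => (Num.sqrt (p x) - Num.sqrt (m x)) ^+ 2).
  by apply: measurable_funX; apply: measurable_funB; exact: msqrt.
have mZ (k : R) (f : T -> R) : measurable_fun setT f ->
    measurable_fun setT (fun x => (k%:E * (f x)%:E)%E).
  by move=> mf; apply: emeasurable_funM => //; exact: mE.
have H0le : (hellinger2 mu p q0 <= 4%:E)%E.
  rewrite /hellinger2 (_ : 4%:E = \int[mu]_x (2%:E * (p x)%:E + 2%:E * (q0 x)%:E))%E; last first.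
    rewrite ge0_integralD //; last 4 first.
    - by move=> x _; rewrite -EFinM lee_fin mulr_ge0.
    - exact: mZ.
    - by move=> x _; rewrite -EFinM lee_fin mulr_ge0.
    - exact: mZ.
    rewrite ge0_integralZl_EFin //; last exact: mE.
    rewrite ge0_integralZl_EFin //; last exact: mE.
    by rewrite ip iq0 mule1 -EFinD; congr EFin; lra.
    by move=> x _; rewrite lee_fin.
    by move=> x _; rewrite lee_fin.
  apply: ge0_le_integral => //.
  - by move=> x _; rewrite lee_fin sqr_ge0.
  - exact: mE.
  - by apply: emeasurable_funD; exact: mZ.
  - move=> x _; rewrite -!EFinM -EFinD lee_fin.
    have := sqr_sqrtr (p0 x); have := sqr_sqrtr (q00 x).
    move: (Num.sqrt (p x)) (Num.sqrt (q0 x)) => a b <- <-.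
    have := sqr_ge0 (a + b); nra.
have H0ge : (0 <= hellinger2 mu p q0)%E.
  by apply: integral_ge0 => x _; rewrite lee_fin sqr_ge0.
have [r [hr r0 r4]] : exists r, [/\ hellinger2 mu p q0 = r%:E, 0 <= r & r <= 4].
  move: H0ge H0le; case: (hellinger2 mu p q0) => [r||] // ? ?.
  by exists r; rewrite -!lee_fin.
have key : (hellinger2 mu p m + ((1 - s) * s)%:E =
             s%:E * hellinger2 mu p q0 + ((1 - s)%:E + eps%:E))%E.
  rewrite /hellinger2.
  transitivity (\int[mu]_x (((Num.sqrt (p x) - Num.sqrt (m x)) ^+ 2)%:E
                            + ((1 - s) * s)%:E * (q0 x)%:E))%E.
    rewrite ge0_integralD //; last 4 first.
    - by move=> x _; rewrite lee_fin sqr_ge0.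
    - exact: mE.
    - by move=> x _; rewrite -EFinM lee_fin mulr_ge0 // mulr_ge0.
    - exact: mZ.
    rewrite ge0_integralZl_EFin //.
    all: try by [rewrite iq0 mule1 | move=> x _; rewrite lee_fin | exact: mE | rewrite mulr_ge0].
  transitivity (\int[mu]_x (s%:E * ((Num.sqrt (p x) - Num.sqrt (q0 x)) ^+ 2)%:E
                  + ((1 - s)%:E * (p x)%:E + eps%:E * (q1 x)%:E)))%E.
    apply: ae_eq_integral => //.
    - by apply: emeasurable_funD; [exact: mE | exact: mZ].
    - by apply: emeasurable_funD; [exact: mZ | apply: emeasurable_funD; exact: mZ].
    apply: filterS ae => x [hpq hmx] _.
    rewrite -!EFinM -!EFinD; congr EFin.
    by rewrite addrA; apply: pt_id.
  rewrite ge0_integralD //; last 4 first.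
  - by move=> x _; rewrite -EFinM lee_fin mulr_ge0 // sqr_ge0.
  - exact: mZ.
  - by move=> x _; rewrite -!EFinM -EFinD lee_fin addr_ge0 // mulr_ge0 // mulr_ge0.
  - by apply: emeasurable_funD; exact: mZ.
  rewrite ge0_integralD //; last 4 first.
  - by move=> x _; rewrite -EFinM lee_fin mulr_ge0 // mulr_ge0.
  - exact: mZ.
  - by move=> x _; rewrite -EFinM lee_fin mulr_ge0.
  - exact: mZ.
  rewrite ge0_integralZl_EFin //; last exact: mE.
  rewrite ge0_integralZl_EFin //; last exact: mE.
  rewrite ge0_integralZl_EFin //; last exact: mE.
  - by rewrite ip iq1 !mule1.
  - by move=> x _; rewrite lee_fin.
  - by move=> x _; rewrite lee_fin.
  - by move=> x _; rewrite lee_fin sqr_ge0.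
have hm_eq : hellinger2 mu p m = (2 * (1 - s) + s * r)%:E.
  move: key; rewrite hr -!EFinM -!EFinD.
  case: (hellinger2 mu p m) => [h| |] //= [eqh].
  congr EFin; nra.
rewrite hm_eq hr; split.
  by rewrite -EFinM -EFinD.
rewrite -EFin_max -!EFinM !lee_fin.
have [h|h] := leP eps r.
  apply/andP; split; nra.
apply/andP; split; nra.
Qed.
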